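(* There exist an integer $m\ge 3$, parameters $\beta,\beta',p,p'\in[0,1]$ and $\pi\in(0,1)$ such that the games $G(m,\beta,\beta')$ and $G(m,p,p')$ are both losing games, while their random mixture $G(m,\pi p+(1-\pi)\beta,\ \pi p'+(1-\pi)\beta')$ is a winning game.
   Context: For $m\ge1$ and $a,a'\in[0,1]$, the Parrondo game $G(m,a,a')$ is the Markov chain $\{S_n\}$ on $\mathbb{Z}$ with $S_0=0$, steps $S_{n+1}-S_n\in\{-1,+1\}$, and $P(S_{n+1}-S_n=1\mid S_0,\dots,S_n)=a'\,1_{[S_n\in m\mathbb{Z}]}+a\,1_{[S_n\notin m\mathbb{Z}]}$. A game is called winning, losing, or fair according as the almost sure limit of $S_n/n$ is positive, negative, or zero. The random mixture with mixing probability $\pi$ corresponds to choosing, independently at each play, the first game with probability $\pi$ and the second with probability $1-\pi$. *)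

(* Defs.v *)
From HB Require Import structures.
From mathcomp Require Import all_boot all_order all_algebra.
From mathcomp Require Import all_classical all_reals all_analysis.
Set Implicit Arguments. Unset Strict Implicit. Unset Printing Implicit Defensive.
Import Order.TTheory GRing.Theory Num.Theory.
Local Open Scope classical_set_scope.
Local Open Scope ring_scope.
Import numFieldNormedType.Exports.

Definition up_prob (R : realType) (m : nat) (a a' : R) (x : int) : R :=
  if (m%:Z %| x)%Z then a' else a.

(* S : nat -> T -> int is a realization, on the probability space (T,P),
   of the Parrondo game G(m,a,a'): S_0 = 0, steps are +-1, the events
   {S_n = k} are measurable, and for every n and every history h,
   P(S_0=h_0,...,S_n=h_n, S_{n+1}-S_n = 1) = up_prob(h_n) * P(S_0=h_0,...,S_n=h_n),
   i.e. P(S_{n+1}-S_n=1 | S_0,...,S_n) = a' 1[S_n in mZ] + a 1[S_n notin mZ]. *)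
Definition parrondo_realization (R : realType) (d : measure_display)
    (T : measurableType d) (P : probability T R)
    (m : nat) (a a' : R) (S : nat -> T -> int) : Prop :=
  (forall w, S 0%N w = 0) /\
  (forall n w, S n.+1 w - S n w = 1 \/ S n.+1 w - S n w = -1) /\
  (forall n (k : int), measurable [set w | S n w = k]) /\
  (forall n (h : nat -> int),
     P [set w | (forall i, (i <= n)%N -> S i w = h i) /\ S n.+1 w - S n w = 1]
     = ((up_prob m a a' (h n))%:E *
        P [set w | forall i, (i <= n)%N -> S i w = h i])%E).

Definition game_realizable (R : realType) (m : nat) (a a' : R) : Prop :=
  exists (d : measure_display) (T : measurableType d) (P : probability T R)
         (S : nat -> T -> int), parrondo_realization P m a a' S.

Definition winning_game (R : realType) (m : nat) (a a' : R) : Prop :=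
  game_realizable m a a' /\
  forall (d : measure_display) (T : measurableType d) (P : probability T R)
         (S : nat -> T -> int), parrondo_realization P m a a' S ->
    {ae P, forall w, exists l : R, 0 < l /\
        (fun n : nat => (S n w)%:~R / n%:R) @ \oo --> (l : R^o)}.

Definition losing_game (R : realType) (m : nat) (a a' : R) : Prop :=
  game_realizable m a a' /\
  forall (d : measure_display) (T : measurableType d) (P : probability T R)
         (S : nat -> T -> int), parrondo_realization P m a a' S ->
    {ae P, forall w, exists l : R, l < 0 /\
        (fun n : nat => (S n w)%:~R / n%:R) @ \oo --> (l : R^o)}.

(* Main.v *)
Require Import Defs.
From HB Require Import structures.
From mathcomp Require Import all_boot all_order all_algebra.
From mathcomp Require Import all_classical all_reals all_analysis.
From mathcomp Require Import ring lra.
Set Implicit Arguments. Unset Strict Implicit. Unset Printing Implicit Defensive.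
Import Order.TTheory GRing.Theory Num.Theory.
Import numFieldNormedType.Exports.
Local Open Scope classical_set_scope.
Local Open Scope ring_scope.
Section Paths.
Variable R : realFieldType.
Variable u : int -> R.
Hypothesis u01 : forall x, 0 <= u x <= 1.

Definition stp (x : bool) : int := if x then 1 else -1.
Fixpoint pos (b : seq bool) : int := if b is x :: b' then pos b' + stp x else 0.
Definition tp (x : bool) (z : int) : R := if x then u z else 1 - u z.
Fixpoint wt (b : seq bool) : R := if b is x :: b' then wt b' * tp x (pos b') else 1.
Fixpoint paths (n : nat) : seq (seq bool) :=
  if n is n'.+1 then flatten [seq [:: true :: b; false :: b] | b <- paths n']
  else [:: [::]].

Lemma big_paths (V : Type) (idx : V) (op : Monoid.com_law idx) n (F : seq bool -> V) :
  \big[op/idx]_(b <- paths n.+1) F b =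
  \big[op/idx]_(b <- paths n) op (F (true :: b)) (F (false :: b)).
Proof.
rewrite /= big_flatten /= big_map; apply: eq_bigr => b _.
by rewrite !big_cons big_nil Monoid.mulm1.
Qed.

Lemma mem_paths n b : (b \in paths n) = (size b == n).
Proof.
elim: n b => [|n IH] b; first by case: b.
apply/idP/idP.
  move=> /flattenP [s /mapP [b' b'in ->]]; rewrite !inE => /orP[] /eqP ->;
  by rewrite /= eqSS -IH.
case: b => [//|x b] /=; rewrite eqSS -IH => bin.
apply/flattenP; exists [:: true :: b; false :: b]; first by apply/mapP; exists b.
by case: x; rewrite !inE eqxx ?orbT.
Qed.

Lemma tp_ge0 x z : 0 <= tp x z.
Proof. by case: x; have := u01 z; rewrite /tp; lra. Qed.

Lemma wt_ge0 b : 0 <= wt b.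
Proof. by elim: b => [|x b IH] //=; rewrite mulr_ge0 // tp_ge0. Qed.

Lemma sum_wt n : \sum_(b <- paths n) wt b = 1.
Proof.
elim: n => [|n IH]; first by rewrite /= big_cons big_nil addr0.
rewrite big_paths -[RHS]IH; apply: eq_bigr => b _ /=.
by rewrite /tp -mulrDr addrC subrK mulr1.
Qed.

Variables (f : int -> R) (c K : R).
Hypothesis mart : forall z, u z * (f (z + 1) - f z - c) + (1 - u z) * (f (z - 1) - f z - c) = 0.
Hypothesis bndp : forall z, `|f (z + 1) - f z - c| <= K.
Hypothesis bndm : forall z, `|f (z - 1) - f z - c| <= K.

Definition Mn (n : nat) (b : seq bool) := f (pos b) - f 0 - c * n%:R.

Lemma K_ge0 : 0 <= K.
Proof. exact: le_trans (normr_ge0 _) (bndp 0). Qed.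

Lemma step_ineq2 (uu M Dp Dm : R) : 0 <= uu <= 1 ->
  uu * Dp + (1 - uu) * Dm = 0 -> `|Dp| <= K -> `|Dm| <= K ->
  uu * (M + Dp) ^+ 2 + (1 - uu) * (M + Dm) ^+ 2 <= M ^+ 2 + K ^+ 2.
Proof.
move=> hu h0 hp hm.
have hp2 : Dp ^+ 2 <= K ^+ 2 by rewrite -real_normK ?num_real // lerXn2r ?nnegrE // K_ge0.
have hm2 : Dm ^+ 2 <= K ^+ 2 by rewrite -(real_normK (num_real Dm)) lerXn2r ?nnegrE // K_ge0.
have -> : uu * (M + Dp) ^+ 2 + (1 - uu) * (M + Dm) ^+ 2 =
  M ^+ 2 + 2 * M * (uu * Dp + (1 - uu) * Dm) + (uu * Dp ^+ 2 + (1 - uu) * Dm ^+ 2) by ring.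
rewrite h0 mulr0 addr0 lerD2l.
case/andP: hu => hu0 hu1.
have := ler_wpM2l hu0 hp2; have : 0 <= 1 - uu by lra.
move=> h1u /(lerD) /(_ (ler_wpM2l h1u hm2)). lra.
Qed.

End Paths.
Section Moments.
Variable R : realFieldType.
Variable u : int -> R.
Hypothesis u01 : forall x, 0 <= u x <= 1.
Variables (f : int -> R) (c K : R).
Hypothesis mart : forall z, u z * (f (z + 1) - f z - c) + (1 - u z) * (f (z - 1) - f z - c) = 0.
Hypothesis bndp : forall z, `|f (z + 1) - f z - c| <= K.
Hypothesis bndm : forall z, `|f (z - 1) - f z - c| <= K.

Local Notation Mn := (Mn f c).
Local Notation wt := (wt u).

Lemma Mn_cons n x b : Mn n.+1 (x :: b) = Mn n b + (f (pos b + stp x) - f (pos b) - c).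
Proof. rewrite /Mn /= -addn1 natrD; ring. Qed.

Lemma eqle (x y : R) : x = y -> x <= y. Proof. by move=> ->. Qed.

Lemma step_ineq4 (uu M Dp Dm : R) : 0 <= uu <= 1 ->
  uu * Dp + (1 - uu) * Dm = 0 -> `|Dp| <= K -> `|Dm| <= K ->
  uu * (M + Dp) ^+ 4 + (1 - uu) * (M + Dm) ^+ 4 <=
    M ^+ 4 + 8 * K ^+ 2 * M ^+ 2 + 3 * K ^+ 4.
Proof.
move=> /andP[hu0 hu1] h0 hp hm.
have K0 : 0 <= K by exact: le_trans (normr_ge0 _) hp.
have h1u : 0 <= 1 - uu by lra.
set A2 := uu * Dp ^+ 2 + (1 - uu) * Dm ^+ 2.
set A3 := uu * Dp ^+ 3 + (1 - uu) * Dm ^+ 3.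
set A4 := uu * Dp ^+ 4 + (1 - uu) * Dm ^+ 4.
have -> : uu * (M + Dp) ^+ 4 + (1 - uu) * (M + Dm) ^+ 4 =
  M ^+ 4 + 4 * M ^+ 3 * (uu * Dp + (1 - uu) * Dm) + 6 * M ^+ 2 * A2 + 4 * M * A3 + A4
  by rewrite /A2 /A3 /A4; ring.
rewrite h0 mulr0 addr0.
have pw k (D : R) : `|D| <= K -> `|D ^+ k| <= K ^+ k.
  by move=> hD; rewrite normrX lerXn2r ?nnegrE.
have cvx k : `|uu * Dp ^+ k + (1 - uu) * Dm ^+ k| <= K ^+ k.
  apply: le_trans (ler_normD _ _) _.
  rewrite !normrM (ger0_norm hu0) (ger0_norm h1u).
  have := ler_wpM2l hu0 (pw k _ hp); have := ler_wpM2l h1u (pw k _ hm).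
  move=> a b; apply: le_trans (lerD b a) _; lra.
have hA2 : A2 <= K ^+ 2 by apply: le_trans (ler_norm _) (cvx 2%N).
have hA4 : A4 <= K ^+ 4 by apply: le_trans (ler_norm _) (cvx 4%N).
have hA3 : 4 * M * A3 <= 2 * K ^+ 2 * (M ^+ 2 + K ^+ 2).
  have h3 := cvx 3%N; rewrite -/A3 in h3.
  have : 4 * M * A3 <= 4 * `|M| * K ^+ 3.
    apply: le_trans (ler_norm _) _; rewrite !normrM (ger0_norm (ler0n _ 4)).
    by rewrite -mulrA -[X in _ <= X]mulrA ler_wpM2l // ler_wpM2l.
  move=> h; apply: le_trans h _.
  have : 0 <= (`|M| - K) ^+ 2 by rewrite sqr_ge0.
  have -> : M ^+ 2 = `|M| ^+ 2 by rewrite real_normK // num_real.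
  move=> hs; nra.
have hM2 : 0 <= M ^+ 2 by rewrite sqr_ge0.
have : 6 * M ^+ 2 * A2 <= 6 * M ^+ 2 * K ^+ 2.
  by rewrite ler_wpM2l // mulr_ge0.
nra.
Qed.

Lemma E2_bound n : \sum_(b <- paths n) wt b * Mn n b ^+ 2 <= K ^+ 2 * n%:R.
Proof.
elim: n => [|n IH].
  rewrite /= big_cons big_nil /Mn /= subrr mulr0 subr0 expr0n /=; simpl; by rewrite mulr0 addr0 mulr0.
rewrite big_paths.
apply: le_trans (_ : \sum_(b <- paths n) (wt b * Mn n b ^+ 2 + wt b * K ^+ 2) <= _).
  apply: ler_sum => b _; rewrite /= !Mn_cons /=.
  rewrite /tp -!mulrA -mulrDr -mulrDr ler_wpM2l ?wt_ge0 //.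
  apply: step_ineq2 => //; exact: mart.
rewrite big_split /= -big_distrl /= sum_wt // mul1r -natr1 mulrDr mulr1.
by rewrite lerD2r.
Qed.

Lemma E4_bound n : \sum_(b <- paths n) wt b * Mn n b ^+ 4 <= 8 * K ^+ 4 * (n%:R) ^+ 2.
Proof.
have K0 : 0 <= K by exact: le_trans (normr_ge0 _) (bndp 0).
elim: n => [|n IH].
  rewrite /= big_cons big_nil /Mn /= subrr mulr0 subr0 expr0n /=; simpl; by rewrite mulr0 addr0 expr0n /= mulr0.
rewrite big_paths.
apply: le_trans (_ : \sum_(b <- paths n) (wt b * Mn n b ^+ 4 + 8 * K ^+ 2 * (wt b * Mn n b ^+ 2) + 3 * K ^+ 4 * wt b) <= _).
  apply: ler_sum => b _; rewrite /= !Mn_cons /=.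
  rewrite /tp.
  have h := step_ineq4 (Mn n b) (u01 (pos b)) (mart (pos b)) (bndp (pos b)) (bndm (pos b)).
  have := ler_wpM2l (wt_ge0 u01 b) h.
  move=> h'; apply: le_trans (le_trans _ h') _; apply: eqle; ring.
rewrite !big_split /= -!mulr_sumr sum_wt // mulr1.
have := E2_bound n; have := IH.
set e4 := \sum_(i <- _) _; set e2 := \sum_(i <- _) _.
move=> h4 h2.
have hK2 : 0 <= 8 * K ^+ 2 by rewrite mulr_ge0 // exprn_ge0.
have := ler_wpM2l hK2 h2 => h2'.
rewrite -natr1.
have hn : 0 <= (n%:R : R) by [].
have -> : K ^+ 4 = K ^+ 2 * K ^+ 2 by rewrite -exprD.
have : 0 <= K ^+ 2 by rewrite exprn_ge0.
rewrite -exprD /= in h4 *.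
move: h2'; rewrite mulrA => h2'.
nra.
Qed.

End Moments.
Section Markov.
Variable R : realFieldType.
Variable u : int -> R.
Hypothesis u01 : forall x, 0 <= u x <= 1.
Variables (f : int -> R) (c K : R).
Hypothesis mart : forall z, u z * (f (z + 1) - f z - c) + (1 - u z) * (f (z - 1) - f z - c) = 0.
Hypothesis bndp : forall z, `|f (z + 1) - f z - c| <= K.
Hypothesis bndm : forall z, `|f (z - 1) - f z - c| <= K.

Lemma markov_paths (e : R) n : 0 < e -> (0 < n)%N ->
  \sum_(b <- paths n) (if e * n%:R < `|Mn f c n b| then wt u b else 0)
    <= (8 * K ^+ 4 / e ^+ 4) / (n%:R ^+ 2).
Proof.
move=> e0 n0.
have n0' : 0 < (n%:R : R) by rewrite ltr0n.
have D0 : 0 < (e * n%:R) ^+ 4 by rewrite exprn_gt0 // mulr_gt0.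
apply: le_trans (_ : \sum_(b <- paths n) wt u b * Mn f c n b ^+ 4 / (e * n%:R) ^+ 4 <= _).
  apply: ler_sum => b _; case: ifPn => h; last first.
    by rewrite mulr_ge0 ?invr_ge0 ?(ltW D0) // mulr_ge0 ?wt_ge0 // exprn_even_ge0.
  rewrite -mulrA -[X in X <= _]mulr1 ler_wpM2l ?wt_ge0 // ler_pdivlMr // mul1r.
  have -> : Mn f c n b ^+ 4 = `|Mn f c n b| ^+ 4.
    by rewrite -normrX ger0_norm // exprn_even_ge0.
  by rewrite ltW // ltrXn2r // ltW // mulr_gt0.
rewrite -mulr_suml.
apply: le_trans (_ : 8 * K ^+ 4 * n%:R ^+ 2 / (e * n%:R) ^+ 4 <= _).
  by rewrite ler_pM2r ?invr_gt0 // E4_bound.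
apply: eqle; field.
by rewrite lt0r_neq0 // lt0r_neq0 ?exprn_gt0.
Qed.

End Markov.
Section Partition.
Context (R : realType) d (T : measurableType d) (P : probability T R).
Variable pre : nat -> T -> seq bool.
Hypothesis pre0 : forall w, pre 0 w = [::].
Hypothesis preS : forall n w, exists x, pre n.+1 w = x :: pre n w.
Hypothesis mpre : forall n b, measurable [set w | pre n w = b].

Lemma size_pre n w : size (pre n w) = n.
Proof.
elim: n => [|n IH]; first by rewrite pre0.
by have [x ->] := preS n w; rewrite /= IH.
Qed.

Lemma pre_mem n w : pre n w \in paths n.
Proof. by rewrite mem_paths size_pre. Qed.

Lemma pre_drop i n w : (i <= n)%N -> pre i w = drop (n - i) (pre n w).
Proof.
elim: n => [|n IH]; first by rewrite leqn0 => /eqP ->; rewrite drop0.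
rewrite leq_eqVlt => /orP[/eqP ->|]; first by rewrite subnn drop0.
by rewrite ltnS => hi; rewrite subSn // IH //; have [x ->] := preS n w.
Qed.

Lemma pre_split n b : [set w | pre n w = b] =
  [set w | pre n.+1 w = true :: b] `|` [set w | pre n.+1 w = false :: b].
Proof.
apply/seteqP; split => w /=.
  by move=> <-; have [[] ->] := preS n w; [left|right].
by case=> h; have [x hx] := preS n w; move: h; rewrite hx => -[_ h'].
Qed.

Lemma partition n A : measurable A ->
  P A = (\sum_(b <- paths n) P (A `&` [set w | pre n w = b]))%E.
Proof.
move=> mA; elim: n => [|n IH].
  rewrite /= big_cons big_nil adde0; congr (P _).
  by apply/seteqP; split => w /=; [move=> Aw; split => //; rewrite pre0 | case].
rewrite IH big_paths; apply: eq_bigr => b _.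
rewrite pre_split setIUr measureU //; try exact: measurableI.
apply/seteqP; split => w //= [[_ ->] [_]] //.
Qed.

Lemma event_measurable n (F : pred (seq bool)) :
  measurable [set w | F (pre n w)].
Proof.
have -> : [set w | F (pre n w)] =
    \big[setU/set0]_(b <- paths n | F b) [set w | pre n w = b].
  rewrite -bigcup_seq_cond; apply/seteqP; split => w /=.
    by move=> Fw; exists (pre n w) => //=; rewrite pre_mem.
  by case=> b /= /andP[_ Fb] hb; rewrite hb.
by apply: bigsetU_measurable => b _.
Qed.

Variable wt : seq bool -> R.
Hypothesis Pwt : forall n b, b \in paths n -> P [set w | pre n w = b] = (wt b)%:E.

Lemma event_prob n (F : pred (seq bool)) :
  P [set w | F (pre n w)] = (\sum_(b <- paths n) (if F b then wt b else 0))%:E.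
Proof.
rewrite (partition n (event_measurable n F)) -sumEFin big_seq [RHS]big_seq.
apply: eq_bigr => b bin.
case: ifPn => Fb.
  rewrite -(Pwt bin); congr (P _); apply/seteqP; split => w /=; first by case.
  by move=> h; split => //; rewrite h.
transitivity (P set0); last by rewrite measure0.
congr (P _); apply/seteqP; split => w //= [h1 h2].
by move: h1; rewrite h2 (negbTE Fb).
Qed.

End Partition.
Section Realization.
Context (R : realType) d (T : measurableType d) (P : probability T R).
Variables (m : nat) (a a' : R) (S : nat -> T -> int).
Hypothesis ha : 0 <= a <= 1.
Hypothesis ha' : 0 <= a' <= 1.
Hypothesis HS : parrondo_realization P m a a' S.

Local Notation u := (up_prob m a a').

Lemma u01 x : 0 <= u x <= 1.
Proof. by rewrite /up_prob; case: ifP. Qed.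

Let HS0 : forall w, S 0%N w = 0. Proof. by case: HS. Qed.
Let HSst : forall n w, S n.+1 w - S n w = 1 \/ S n.+1 w - S n w = -1.
Proof. by case: HS => _ []. Qed.
Let HSm : forall n (k : int), measurable [set w | S n w = k].
Proof. by case: HS => _ [_ []]. Qed.
Let HSp : forall n (h : nat -> int),
     P [set w | (forall i, (i <= n)%N -> S i w = h i) /\ S n.+1 w - S n w = 1]
     = ((u (h n))%:E * P [set w | forall i, (i <= n)%N -> S i w = h i])%E.
Proof. by case: HS => _ [_ []]. Qed.

Lemma seteq_mem (A B : set T) w : A = B -> A w -> B w.
Proof. by move=> ->. Qed.

Definition bit n w := (S n.+1 w - S n w == 1).
Fixpoint steps n w := if n is n'.+1 then bit n' w :: steps n' w else [::].

Lemma stepsS n w : exists x, steps n.+1 w = x :: steps n w.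
Proof. by exists (bit n w). Qed.

Lemma S_steps n w : S n w = pos (steps n w).
Proof.
elim: n => [|n IH]; first by rewrite HS0.
rewrite /= -IH /bit.
by case: (HSst n w) => h; rewrite h /=; move/eqP: h; rewrite subr_eq => /eqP ->; rewrite addrC.
Qed.

Lemma steps_drop i n w : (i <= n)%N -> steps i w = drop (n - i) (steps n w).
Proof.
elim: n => [|n IH]; first by rewrite leqn0 => /eqP ->.
rewrite leq_eqVlt => /orP[/eqP ->|]; first by rewrite subnn drop0.
by rewrite ltnS => hi; rewrite subSn //= IH.
Qed.

Definition H (b : seq bool) (i : nat) := pos (drop (size b - i) b).

Lemma E_hist n b : size b = n ->
  [set w | steps n w = b] = [set w | forall i, (i <= n)%N -> S i w = H b i].
Proof.
move=> sb; apply/seteqP; split => w /=.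
  by move=> hw i hi; rewrite S_steps (steps_drop w hi) hw /H sb.
elim: n b sb => [|n IH] b sb h; first by move: sb h; case: b.
move: sb h; case: b => [//|x b] /= [sb] h.
have hb : steps n w = b.
  apply: IH => // i hi; rewrite h ?(leq_trans hi) // /H /= sb subSn //.
have h1 := h n.+1 (leqnn _); have h0 := h n (leqnSn _).
rewrite /H /= sb subnn subSn // subnn /= drop0 in h1 h0.
rewrite hb; congr (_ :: _).
by rewrite /bit h1 h0 addrC addKr; clear h h1; case: x.
Qed.

Lemma bit_measurable n x : (forall b, measurable [set w | steps n w = b]) ->
  measurable [set w | bit n w = x].
Proof.
move=> mE.
have mU : measurable [set w | bit n w].
  have -> : [set w | bit n w] = \big[setU/set0]_(b <- paths n)
      ([set w | steps n w = b] `&` [set w | S n.+1 w = pos b + 1]).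
    rewrite -bigcup_seq; apply/seteqP; split => w /=.
      move=> /eqP hb; exists (steps n w) => /=.
        by rewrite (pre_mem (fun=> erefl) stepsS).
      by split => //; rewrite -S_steps -hb addrC subrK.
    by case=> b _ [hb hs]; rewrite /bit hs -hb -S_steps addrC addKr.
  by apply: bigsetU_measurable => b _; apply: measurableI.
case: x.
  by have -> : [set w | bit n w = true] = [set w | bit n w] by [].
have -> : [set w | bit n w = false] = ~` [set w | bit n w].
  by apply/seteqP; split => w /=; [move=> -> | move/negP/negbTE].
exact: measurableC.
Qed.

Lemma steps_measurable n b : measurable [set w | steps n w = b].
Proof.
elim: n b => [|n IH] b.
  case: b => [|x b].
    by rewrite (_ : [set w | steps 0 w = [::]] = setT) //; apply/seteqP; split.
  by rewrite (_ : [set w | steps 0 w = x :: b] = set0) //; apply/seteqP; split.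
case: b => [|x b].
  by rewrite (_ : [set w | steps n.+1 w = [::]] = set0) //; apply/seteqP; split.
rewrite /=.
have -> : [set w | bit n w :: steps n w = x :: b] =
    [set w | steps n w = b] `&` [set w | bit n w = x].
  by apply/seteqP; split => w /=; [case=> -> -> | case=> -> ->].
by apply: measurableI => //; exact: bit_measurable.
Qed.

Lemma steps_prob n b : b \in paths n -> P [set w | steps n w = b] = (wt u b)%:E.
Proof.
elim: n b => [|n IH] b.
  rewrite mem_paths size_eq0 => /eqP -> /=.
  rewrite (_ : [set w | steps 0 w = [::]] = setT) ?probability_setT //.
  by apply/seteqP; split.
case: b => [|x b]; first by rewrite mem_paths.
rewrite mem_paths /= => sb.
have sb' : size b = n by apply/eqP.
have bin : b \in paths n by rewrite mem_paths.
have EH := E_hist sb'.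
have Et : [set w | steps n.+1 w = true :: b] =
    [set w | (forall i, (i <= n)%N -> S i w = H b i) /\ S n.+1 w - S n w = 1].
  apply/seteqP; split => w /=.
    case=> hbit hb; split; last by apply/eqP.
    by apply: (seteq_mem EH).
  case=> hh hb1; rewrite /bit hb1 eqxx; congr (_ :: _).
  by apply: (seteq_mem (esym EH)).
have Pt : P [set w | steps n.+1 w = true :: b] = (wt u b * u (pos b))%:E.
  rewrite Et HSp -EH IH // /H sb' subnn drop0 -EFinM mulrC //.
have dec := pre_split stepsS n b.
have Pf : P [set w | steps n.+1 w = false :: b] = (wt u b * (1 - u (pos b)))%:E.
  have : P [set w | steps n w = b] = (P [set w | steps n.+1 w = true :: b] +
                                      P [set w | steps n.+1 w = false :: b])%E.
    rewrite {1}dec measureU //; try exact: steps_measurable.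
    by apply/seteqP; split => w //= [-> []].
  rewrite IH // Pt.
  have fy := fin_num_measure P _ (steps_measurable n.+1 (false :: b)).
  rewrite -(fineK fy) -EFinD => h; have hy := EFin_inj h.
  congr (_%:E).
  have -> : fine (P [set w | steps n.+1 w = false :: b]) = wt u b - wt u b * u (pos b).
    by apply: (addrI (wt u b * u (pos b))); rewrite -hy; ring.
  ring.
by case: x => /=; rewrite /tp.
Qed.

End Realization.
Lemma exists_inv_lt (R : realType) (x : R) : 0 < x -> exists N : nat, (N.+1%:R)^-1 < x.
Proof.
move=> x0; have h := truncnS_gt x^-1; exists (Num.Def.trunc x^-1).
rewrite -[x]invrK ltf_pV2 //; rewrite ?posrE ?invr_gt0 ?ltr0n //; by rewrite invrK.
Qed.

Lemma partial_telescope (R : realFieldType) (C : R) N :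
  \sum_(0 <= i < N.+1) (if i is 0 then 0 else 2 * C * (i%:R^-1 - i.+1%:R^-1))
    = 2 * C * (1 - N.+1%:R^-1).
Proof.
elim: N => [|N IH]; first by rewrite big_nat1 /= invr1 subrr mulr0.
by rewrite big_nat_recr //= IH; ring.
Qed.

Section Convergence.
Context (R : realType) d (T : measurableType d) (P : probability T R).
Variables (m : nat) (a a' : R) (S : nat -> T -> int).
Hypothesis ha : 0 <= a <= 1.
Hypothesis ha' : 0 <= a' <= 1.
Hypothesis HS : parrondo_realization P m a a' S.

Local Notation u := (up_prob m a a').

Variables (g : int -> R) (c G : R).
Hypothesis gb : forall z, `|g z| <= G.
Hypothesis poisson : forall z, u z * (1 + g (z + 1)) + (1 - u z) * (-1 + g (z - 1)) - g z = c.

Let f (z : int) : R := z%:~R + g z.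
Let K := 1 + 2 * G + `|c|.

Let fmart z : u z * (f (z + 1) - f z - c) + (1 - u z) * (f (z - 1) - f z - c) = 0.
Proof. by rewrite /f -(poisson z); ring. Qed.

Let fbndp z : `|f (z + 1) - f z - c| <= K.
Proof.
rewrite /f /K (_ : (z + 1)%:~R = z%:~R + 1); last by rewrite intrD.
have := gb z; have := gb (z + 1); rewrite !ler_norml => /andP[? ?] /andP[? ?].
have := ler_norm c; have := ler_norm (- c); rewrite normrN.
move=> ? ?; apply/andP; split; lra.
Qed.

Let fbndm z : `|f (z - 1) - f z - c| <= K.
Proof.
rewrite /f /K (_ : (z - 1)%:~R = z%:~R - 1); last by rewrite intrB.
have := gb z; have := gb (z - 1); rewrite !ler_norml => /andP[? ?] /andP[? ?].
have := ler_norm c; have := ler_norm (- c); rewrite normrN.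
move=> ? ?; apply/andP; split; lra.
Qed.

Let u01' : forall x, 0 <= u x <= 1.
Proof. by move=> x; rewrite /up_prob; case: ifP. Qed.

Let mE := steps_measurable HS.
Let st := steps S.

Let EP n (F : pred (seq bool)) :
  P [set w | F (st n w)] = (\sum_(b <- paths n) (if F b then wt u b else 0))%:E.
Proof. exact: (event_prob (fun=> erefl) (@stepsS _ _ S) mE (steps_prob HS)). Qed.

Let EM n (F : pred (seq bool)) : measurable [set w | F (st n w)].
Proof. exact: (event_measurable (fun=> erefl) (@stepsS _ _ S) mE). Qed.

Definition eps_k (k : nat) : R := (k.+1%:R)^-1.

Definition Aev (k n : nat) : set T :=
  [set w | eps_k k * n%:R < `|Mn f c n (st n w)|].

Let K0 : 0 <= K.
Proof. exact: le_trans (normr_ge0 _) (fbndp 0). Qed.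

Lemma Aev_bound k n :
  (P (Aev k n) <= ((if n is 0 then 0 else 2 * (8 * K ^+ 4 / eps_k k ^+ 4)
        * (n%:R^-1 - n.+1%:R^-1)))%:E)%E.
Proof.
have e0 : 0 < eps_k k by rewrite invr_gt0 ltr0n.
rewrite /Aev (EP n (fun b => eps_k k * n%:R < `|Mn f c n b|)) lee_fin.
case: n => [|n].
  by rewrite /= big_cons big_nil /Mn /= subrr !mulr0 subr0 normr0 ltxx addr0.
apply: le_trans (markov_paths u01' fmart fbndp fbndm e0 (ltn0Sn n)) _.
set C := 8 * K ^+ 4 / eps_k k ^+ 4.
have C0 : 0 <= C by rewrite /C; apply: divr_ge0; [apply: mulr_ge0 => //; apply: exprn_ge0 | apply: exprn_ge0; apply: ltW].
have x1 : 1 <= (n.+1%:R : R) by rewrite ler1n.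
have -> : n.+2%:R = n.+1%:R + 1 :> R by rewrite -natr1.
set x := (n.+1%:R : R).
have -> : x^-1 - (x + 1)^-1 = (x * (x + 1))^-1.
  by field; apply/andP; split; apply: lt0r_neq0; lra.
have -> : 2 * C * (x * (x + 1))^-1 = C / x ^+ 2 + C * (x - 1) / (x ^+ 2 * (x + 1)).
  by field; apply/andP; split; apply: lt0r_neq0; lra.
rewrite lerDl; apply: divr_ge0; first by apply: mulr_ge0 => //; lra.
by apply: mulr_ge0; [apply: exprn_ge0 | ]; lra.
Qed.


Lemma Aev_measurable k n : measurable (Aev k n).
Proof. exact: (EM n (fun b => eps_k k * n%:R < `|Mn f c n b|)). Qed.

Lemma Aev_limsup k : P (lim_sup_set (Aev k)) = 0%E.
Proof.
apply: lim_sup_set_cvg0; first exact: Aev_measurable.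
set C := 8 * K ^+ 4 / eps_k k ^+ 4.
have C0 : 0 <= C.
  have e0 : 0 < eps_k k by rewrite invr_gt0 ltr0n.
  by rewrite /C; apply: divr_ge0; [apply: mulr_ge0 => //; apply: exprn_ge0 | apply: exprn_ge0; apply: ltW].
pose vr (n : nat) : R := if n is 0 then 0 else 2 * C * (n%:R^-1 - n.+1%:R^-1).
have vr0 n : 0 <= vr n.
  case: n => [|n] //=; apply: mulr_ge0; first by apply: mulr_ge0.
  by rewrite subr_ge0 lef_pV2 ?posrE ?ltr0n // ler_nat.
apply: (@le_lt_trans _ _ (\sum_(0 <= n <oo) (vr n)%:E)%E).
  apply: lee_nneseries => [n _ _|n _]; [exact: measure_ge0 | exact: Aev_bound].
apply: (@le_lt_trans _ _ (2 * C)%:E); last by rewrite ltry.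
apply: lime_le.
  by apply: is_cvg_nneseries => n _ _; rewrite lee_fin.
apply: nearW => N; rewrite sumEFin lee_fin.
case: N => [|N]; first by rewrite big_geq // mulr_ge0.
rewrite partial_telescope -[X in _ <= X]mulr1; apply: ler_wpM2l; first exact: mulr_ge0.
by rewrite lerBlDr lerDl invr_ge0.
Qed.

Theorem realization_cvg :
  P.-negligible (~` [set w | (fun n : nat => (S n w)%:~R / n%:R) @ \oo --> (c : R^o)]).
Proof.
apply: (negligibleS _ (negligible_bigcup (F := fun k => lim_sup_set (Aev k)) _)); last first.
  move=> k; exists (lim_sup_set (Aev k)); split => //; last exact: Aev_limsup.
  rewrite /lim_sup_set; apply: bigcapT_measurable => n.
  by apply: bigcup_measurable => j _; exact: Aev_measurable.
move=> w /=; apply: contra_notP => hw.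
have hk k : exists n0, forall j, (n0 <= j)%N -> ~ Aev k j w.
  apply: contrapT => hn; apply: hw; exists k => // n _.
  apply: contrapT => hn2; apply: hn; exists n => j hj Aj; apply: hn2; exists j => //.
have G0 : 0 <= G by exact: le_trans (normr_ge0 _) (gb 0).
apply/cvgrPdist_le => eps eps0.
have [k hk'] := exists_inv_lt (divr_gt0 eps0 (ltr0n _ 2)).
have [n0 hn0] := hk k.
have e1 : 0 < eps / (4 * (G + 1)) by apply: divr_gt0 => //; lra.
have [N1 hN1] := exists_inv_lt e1.
exists (maxn n0 N1.+1) => // n /= hn.
rewrite geq_max in hn; case/andP: hn => hn1 hn2.
have := hn0 n hn1; rewrite /Aev /= => /negP; rewrite -leNgt => hM.
have n0' : (0 < n)%N by apply: leq_trans hn2.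
have npos : 0 < (n%:R : R) by rewrite ltr0n.
rewrite (S_steps HS).
set z := pos (st n w).
have -> : c - z%:~R / n%:R = - (Mn f c n (st n w) + g 0 - g z) / n%:R.
  by rewrite /Mn /f -/z; field; apply: lt0r_neq0.
rewrite normrM normrN normfV (gtr0_norm npos).
rewrite ler_pdivrMr //.
have h1 : `|Mn f c n (st n w) + g 0 - g z| <= `|Mn f c n (st n w)| + G + G.
  apply: le_trans (ler_normB _ _) _; apply: lerD; last exact: gb.
  by apply: le_trans (ler_normD _ _) _; apply: lerD.
apply: le_trans h1 _.
have hinv : n%:R^-1 <= (N1.+1%:R : R)^-1 by rewrite lef_pV2 ?posrE ?ltr0n // ler_nat.
have h2 : 2 * G <= eps / 2 * n%:R.
  have : n%:R^-1 < eps / (4 * (G + 1)) by apply: le_lt_trans hinv hN1.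
  move=> hh; rewrite -[eps / (4 * (G + 1))]invrK ltf_pV2 ?posrE ?invr_gt0 // invf_div ltr_pdivrMr // in hh.
  rewrite (_ : eps / 2 * n%:R = (n%:R * eps) / 2); last by ring.
  lra.
have h3 : eps_k k * n%:R <= eps / 2 * n%:R by rewrite ler_pM2r // ltW.
lra.
Qed.
End Convergence.
Section UnifProb.
Context (R : realType).
Definition I01 : set (measurableTypeR R) := `[(0:R), 1[.
Lemma mI01 : measurable I01. Proof. exact: measurable_itv. Qed.
Definition unifP := mrestr (lebesgue_measure (R := R)) mI01.
Lemma unifP_setT : unifP setT = 1%E.
Proof.
rewrite /unifP /mrestr setTI /I01 lebesgue_measure_itv /= lte_fin ltr01.
by rewrite -EFinB subr0.
Qed.
HB.instance Definition _ := Measure.copy unifP (mrestr (lebesgue_measure (R := R)) mI01).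
HB.instance Definition _ := @Measure_isProbability.Build _ (measurableTypeR R) R unifP unifP_setT.
End UnifProb.

Section Leb.
Context (R : realType).
Variables (m : nat) (a a' : R).
Hypothesis ha : 0 <= a <= 1.
Hypothesis ha' : 0 <= a' <= 1.
Local Notation u := (up_prob m a a').

Let u01 x : 0 <= u x <= 1.
Proof. by rewrite /up_prob; case: ifP. Qed.

Fixpoint lohi (b : seq bool) : R * R :=
  if b is x :: b' then
    let lo := (lohi b').1 in let hi := (lohi b').2 in
    let s := lo + u (pos b') * (hi - lo) in
    if x then (lo, s) else (s, hi)
  else (0, 1).
Definition lo b := (lohi b).1.
Definition hi b := (lohi b).2.
Definition spl b := lo b + u (pos b) * (hi b - lo b).

Lemma lohi_inv b : [/\ 0 <= lo b, lo b <= hi b, hi b <= 1 & hi b - lo b = wt u b].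
Proof.
elim: b => [|x b [h0 h1 h2 h3]]; first by rewrite /lo /hi /=; split => //; rewrite subr0.
have := u01 (pos b) => /andP[hu0 hu1].
have hs1 : lo b <= spl b.
  by rewrite /spl lerDl mulr_ge0 // subr_ge0.
have hs2 : spl b <= hi b.
  rewrite /spl; have : u (pos b) * (hi b - lo b) <= 1 * (hi b - lo b).
    by apply: ler_wpM2r => //; rewrite subr_ge0.
  lra.
rewrite /lo /hi /= -/(lo b) -/(hi b) -/(spl b); case: x => /=; split => //;
  try lra; rewrite /tp -h3 /spl; ring.
Qed.

Fixpoint pre (n : nat) (w : R) : seq bool :=
  if n is n'.+1 then (w < spl (pre n' w)) :: pre n' w else [::].

Lemma preS n w : exists x, pre n.+1 w = x :: pre n w.
Proof. by eexists. Qed.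

Lemma pre_itv n b w : size b = n -> 0 <= w < 1 -> (pre n w = b <-> lo b <= w < hi b).
Proof.
move=> sb w01; elim: n b sb => [|n IH] b sb.
  by case: b sb => // _ /=; rewrite /lo /hi /=; split => // _.
case: b sb => [//|x b] /= [sb].
have [h0 h1 h2 h3] := lohi_inv b.
have := u01 (pos b) => /andP[hu0 hu1].
have hs1 : lo b <= spl b by rewrite /spl lerDl mulr_ge0 // subr_ge0.
have hs2 : spl b <= hi b.
  rewrite /spl; have : u (pos b) * (hi b - lo b) <= 1 * (hi b - lo b).
    by apply: ler_wpM2r => //; rewrite subr_ge0.
  lra.
rewrite /lo /hi /= -/(lo b) -/(hi b) -/(spl b).
split.
  case=> hx hb; rewrite hb in hx; have := (IH b sb).1 hb => /andP[hl hh].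
  case: x hx => /= hx; first by rewrite hl hx.
  by rewrite hh andbT leNgt hx.
case: x => /= /andP[hl hh].
  have hb : pre n w = b by apply/(IH b sb)/andP; split => //; lra.
  by rewrite hb hh.
have hb : pre n w = b by apply/(IH b sb)/andP; split => //; lra.
by rewrite hb ltNge hl.
Qed.

Lemma pre_measurable n b : measurable [set w : measurableTypeR R | pre n w = b].
Proof.
elim: n b => [|n IH] b.
  case: b => [|x b].
    by rewrite (_ : [set w | pre 0 w = [::]] = setT) //; apply/seteqP; split.
  by rewrite (_ : [set w | pre 0 w = x :: b] = set0) //; apply/seteqP; split.
case: b => [|x b].
  by rewrite (_ : [set w | pre n.+1 w = [::]] = set0) //; apply/seteqP; split.
have -> : [set w : measurableTypeR R | pre n.+1 w = x :: b] =
    [set w | pre n w = b] `&` [set w | (w < spl b) = x].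
  by apply/seteqP; split => w /=; [case=> <- -> | case=> -> ->].
apply: measurableI => //.
case: x.
  rewrite (_ : [set w | (w < spl b) = true] = [set` Interval -oo%O (BLeft (spl b))]); first exact: measurable_itv.
  by apply/seteqP; split => w /=; rewrite in_itv /=.
rewrite (_ : [set w | (w < spl b) = false] = [set` Interval (BLeft (spl b)) +oo%O]); first exact: measurable_itv.
by apply/seteqP; split => w /=; rewrite in_itv /= andbT leNgt; [move=> -> | move/negbTE].
Qed.

Lemma pre_prob n b : b \in paths n -> @unifP R [set w | pre n w = b] = (wt u b)%:E.
Proof.
rewrite mem_paths => /eqP sb.
rewrite /unifP /mrestr.
have [h0 h1 h2 h3] := lohi_inv b.
have -> : [set w : measurableTypeR R | pre n w = b] `&` @I01 R = [set` Interval (BLeft (lo b)) (BLeft (hi b))].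
  apply/seteqP; split => w /=.
    case=> hb; rewrite /I01 /= in_itv /= => hw.
    by rewrite in_itv /=; apply/(pre_itv sb hw).
  rewrite in_itv /= => hw.
  have hw01 : 0 <= w < 1.
    by case/andP: hw => ? ?; apply/andP; split; lra.
  split; first exact/(pre_itv sb hw01).
  by rewrite /I01 /= in_itv /=.
rewrite lebesgue_measure_itv /= lte_fin.
case: ltP => hlt; first by rewrite -EFinB h3.
have e : hi b = lo b by lra.
by rewrite -h3 e subrr.
Qed.


Let pre_mE := pre_measurable.

Lemma leb_realization : parrondo_realization (@unifP R) m a a' (fun n w => pos (pre n w)).
Proof.
have EP := event_prob (P := @unifP R) (pre := pre) (fun=> erefl) preS pre_mE pre_prob.
split; first by [].
split.
  move=> n w /=; rewrite addrC addKr.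
  by case: (w < _); [left | right].
split.
  move=> n k.
  rewrite (_ : [set w | pos (pre n w) = k] = [set w | (fun b => pos b == k) (pre n w)]).
    exact: (@event_measurable _ (measurableTypeR R) pre (fun=> erefl) preS pre_mE n (fun b => pos b == k)).
  by apply/seteqP; split => w /= /eqP.
move=> n h.
pose Q b := all (fun i => pos (drop (n - i) b) == h i) (iota 0 n.+1).
have hist : [set w | forall i, (i <= n)%N -> pos (pre i w) = h i] = [set w | Q (pre n w)].
  apply/seteqP; split => w /=.
    move=> H; apply/allP => i; rewrite mem_iota add0n ltnS => hi.
    by rewrite -(pre_drop preS) //; apply/eqP; exact: H.
  move/allP => H i hi; rewrite (@pre_drop _ (measurableTypeR R) pre preS i n w hi); apply/eqP; apply: H.
  by rewrite mem_iota add0n ltnS.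
have histU : [set w | (forall i, (i <= n)%N -> pos (pre i w) = h i) /\
                      pos (pre n.+1 w) - pos (pre n w) = 1] =
             [set w | (fun b => head false b && Q (behead b)) (pre n.+1 w)].
  apply/seteqP; split => w /=.
    case=> H1; rewrite addrC addKr => H2.
    have -> : (w < spl (pre n w)) = true by move: H2; case: (w < _).
    by have : [set w | forall i, (i <= n)%N -> pos (pre i w) = h i] w by [];
       rewrite hist.
  case/andP => H1 H2; split.
    by have : [set w | Q (pre n w)] w by []; rewrite -hist.
  by rewrite addrC addKr H1.
rewrite histU hist (EP n.+1 (fun b => head false b && Q (behead b))) (EP n Q) -EFinM; congr (_%:E).
rewrite big_paths mulr_sumr big_seq [RHS]big_seq; apply: eq_bigr => b bin /=.
rewrite addr0; case: ifP => hQ; last by rewrite mulr0.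
rewrite /tp mulrC.
have : n \in iota 0 n.+1 by rewrite mem_iota leq0n add0n ltnSn.
by move/allP: hQ => H /H; rewrite subnn drop0 => /eqP ->.
Qed.

Lemma leb_realizable : game_realizable m a a'.
Proof. by exists _, _, (@unifP R), (fun n w => pos (pre n w)); exact: leb_realization. Qed.
End Leb.
Section Concrete.
Variable R : realType.

Definition g3 (g1 g2 : R) (z : int) : R :=
  if (z %% 3)%Z == 0 then 0 else if (z %% 3)%Z == 1 then g1 else g2.

Lemma poisson3 (a a' g1 g2 c : R) :
  a' * (1 + g1) + (1 - a') * (-1 + g2) - 0 = c ->
  a * (1 + g2) + (1 - a) * (-1 + 0) - g1 = c ->
  a * (1 + 0) + (1 - a) * (-1 + g1) - g2 = c ->
  forall z, up_prob 3 a a' z * (1 + g3 g1 g2 (z + 1)) +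
    (1 - up_prob 3 a a' z) * (-1 + g3 g1 g2 (z - 1)) - g3 g1 g2 z = c.
Proof.
move=> E0 E1 E2 z.
have e1 : ((z + 1) %% 3)%Z = (((z %% 3)%Z + 1) %% 3)%Z by rewrite modzDml.
have e2 : ((z - 1) %% 3)%Z = (((z %% 3)%Z - 1) %% 3)%Z by rewrite modzDml.
have dv : (3%:Z %| z)%Z = ((z %% 3)%Z == 0).
  by apply/idP/idP => [/dvdz_mod0P -> //|/eqP h]; apply/dvdz_mod0P.
rewrite /g3 /up_prob e1 e2 dv.
have h0 := modz_ge0 z (d := 3) isT; have h1 := ltz_pmod z (d := 3) isT.
move: h0 h1; case: (z %% 3)%Z => [[|[|[|n]]]|n] //= _ _.
Qed.

Lemma g3_bound (g1 g2 : R) z : `|g3 g1 g2 z| <= `|g1| + `|g2|.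
Proof.
rewrite /g3; case: ifP => _; first by rewrite normr0 addr_ge0.
case: ifP => _; first by rewrite lerDl.
by rewrite lerDr.
Qed.

Lemma ae_of_negl d (T : measurableType d) (P : probability T R) (Q Q' : T -> Prop) :
  P.-negligible (~` [set w | Q w]) -> (forall w, Q w -> Q' w) -> {ae P, forall w, Q' w}.
Proof.
move=> N QQ'; apply: (negligibleS _ N) => w /= nQ' Qw; apply: nQ'; exact: QQ'.
Qed.

Lemma game_sign (a a' g1 g2 c : R) (m3 : nat) : m3 = 3%N ->
  0 <= a <= 1 -> 0 <= a' <= 1 ->
  a' * (1 + g1) + (1 - a') * (-1 + g2) - 0 = c ->
  a * (1 + g2) + (1 - a) * (-1 + 0) - g1 = c ->
  a * (1 + 0) + (1 - a) * (-1 + g1) - g2 = c ->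
  game_realizable m3 a a' /\
  forall (d : measure_display) (T : measurableType d) (P : probability T R)
         (S : nat -> T -> int), parrondo_realization P m3 a a' S ->
    {ae P, forall w, (fun n : nat => (S n w)%:~R / n%:R) @ \oo --> (c : R^o)}.
Proof.
move=> -> ha ha' E0 E1 E2; split; first exact: leb_realizable.
move=> d T P S HS.
apply: (ae_of_negl (Q := fun w => (fun n : nat => (S n w)%:~R / n%:R) @ \oo --> (c : R^o))) => //.
exact: (realization_cvg ha ha' HS (g3_bound g1 g2) (poisson3 E0 E1 E2)).
Qed.

End Concrete.
Local Close Scope classical_set_scope.
Theorem corollary4p2 (R : realType) :
  exists (m : nat) (beta beta' p p' pi : R),
    (3 <= m)%N /\
    0 <= beta <= 1 /\ 0 <= beta' <= 1 /\ 0 <= p <= 1 /\ 0 <= p' <= 1 /\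
    0 < pi < 1 /\
    losing_game m beta beta' /\ losing_game m p p' /\
    winning_game m (pi * p + (1 - pi) * beta) (pi * p' + (1 - pi) * beta').
Proof.
exists 3%N, (3 / 7), (5 / 8), (5 / 7), (1 / 8), (1 / 2).
have b1 : 0 <= (3 / 7 : R) <= 1 by apply/andP; split; lra.
have b2 : 0 <= (5 / 8 : R) <= 1 by apply/andP; split; lra.
have b3 : 0 <= (5 / 7 : R) <= 1 by apply/andP; split; lra.
have b4 : 0 <= (1 / 8 : R) <= 1 by apply/andP; split; lra.
do 5 (split => //).
split; first by apply/andP; split; lra.
split.
  have E0 : (5 / 8 : R) * (1 + -220 / 877) + (1 - 5 / 8) * (-1 + -242 / 877) - 0 = -9 / 877 by field.
  have E1 : (3 / 7 : R) * (1 + -242 / 877) + (1 - 3 / 7) * (-1 + 0) - -220 / 877 = -9 / 877 by field.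
  have E2 : (3 / 7 : R) * (1 + 0) + (1 - 3 / 7) * (-1 + -220 / 877) - -242 / 877 = -9 / 877 by field.
  have [hr hc] := @game_sign R _ _ _ _ _ 3 erefl b1 b2 E0 E1 E2.
  split => // d T P S HS; apply: filterS (hc d T P S HS) => w hw.
  by exists (-9 / 877); split => //; lra.
split.
  have E0 : (1 / 8 : R) * (1 + 88 / 93) + (1 - 1 / 8) * (-1 + 22 / 31) - 0 = -1 / 93 by field.
  have E1 : (5 / 7 : R) * (1 + 22 / 31) + (1 - 5 / 7) * (-1 + 0) - 88 / 93 = -1 / 93 by field.
  have E2 : (5 / 7 : R) * (1 + 0) + (1 - 5 / 7) * (-1 + 88 / 93) - 22 / 31 = -1 / 93 by field.
  have [hr hc] := @game_sign R _ _ _ _ _ 3 erefl b3 b4 E0 E1 E2.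
  split => // d T P S HS; apply: filterS (hc d T P S HS) => w hw.
  by exists (-1 / 93); split => //; lra.
set A := (1 / 2 * (5 / 7) + (1 - 1 / 2) * (3 / 7) : R).
set A' := (1 / 2 * (1 / 8) + (1 - 1 / 2) * (5 / 8) : R).
have hA : A = 4 / 7 by rewrite /A; field.
have hA' : A' = 3 / 8 by rewrite /A'; field.
have ba : 0 <= A <= 1 by rewrite hA; apply/andP; split; lra.
have ba' : 0 <= A' <= 1 by rewrite hA'; apply/andP; split; lra.
have E0 : A' * (1 + 242 / 877) + (1 - A') * (-1 + 220 / 877) - 0 = 9 / 877 by rewrite hA'; field.
have E1 : A * (1 + 220 / 877) + (1 - A) * (-1 + 0) - 242 / 877 = 9 / 877 by rewrite hA; field.
have E2 : A * (1 + 0) + (1 - A) * (-1 + 242 / 877) - 220 / 877 = 9 / 877 by rewrite hA; field.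
have [hr hc] := @game_sign R _ _ _ _ _ 3 erefl ba ba' E0 E1 E2.
split => // d T P S HS; apply: filterS (hc d T P S HS) => w hw.
by exists (9 / 877); split => //; lra.
Qed.
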